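(* For all $\theta,\theta'\in\Theta$, $$\|\pi^\rho_\theta\,d\lambda-\pi^\rho_{\theta'}\,d\lambda\|_{TV}\le 2(d-1)\sum_{i=1}^d\Big|1-\frac{\rho(\theta'(i))}{\rho(\theta(i))}\Big|.$$
   Context: Let $\mathsf X\subset\mathbb R^D$ be measurable, $\lambda$ a nonnegative reference measure, $\pi$ a probability density on $\mathsf X$ w.r.t. $\lambda$. $\mathsf X=\bigcup_{i=1}^d\mathsf X_i$ is a partition into disjoint measurable strata, $\theta_\star(i)=\int_{\mathsf X_i}\pi\,d\lambda$ (assumed positive), $\Theta=\{\theta\in(0,1)^d:\sum_i\theta(i)=1\}$. For a measurable $\rho:(0,1)\to(0,\infty)$ and $\theta\in\Theta$, $\pi^\rho_\theta(x)=(Z^\rho_\theta)^{-1}\sum_{i}\frac{\pi(x)}{\rho(\theta(i))}\mathbf 1_{\mathsf X_i}(x)$ with $Z^\rho_\theta=\sum_i\frac{\theta_\star(i)}{\rho(\theta(i))}$. For a signed measure $\nu$, $\|\nu\|_{TV}=\sup\{|\nu(f)|: f \text{ measurable},\ \sup_{\mathsf X}|f|\le1\}$. *)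

(* Defs.v *)
From HB Require Import structures.
From mathcomp Require Import all_boot all_order all_algebra.
From mathcomp Require Import all_classical all_reals all_analysis.
Set Implicit Arguments. Unset Strict Implicit. Unset Printing Implicit Defensive.
Import Order.TTheory GRing.Theory Num.Theory.
Local Open Scope classical_set_scope.
Local Open Scope ring_scope.

Section Defs.
Context {d0 : measure_display} {T : measurableType d0} {R : realType}.

Definition theta_star (lam : {measure set T -> \bar R}) (pi : T -> R)
  (d : nat) (S : 'I_d -> set T) (i : 'I_d) : R :=
  fine (\int[lam]_(x in S i) (pi x)%:E).

Definition in_Theta (d : nat) (th : 'I_d -> R) : Prop :=
  (forall i, 0 < th i < 1) /\ \sum_(i < d) th i = 1.

Definition Zrho (lam : {measure set T -> \bar R}) (pi : T -> R)
  (d : nat) (S : 'I_d -> set T) (rho : R -> R) (th : 'I_d -> R) : R :=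
  \sum_(i < d) theta_star lam pi S i / rho (th i).

Definition pirho (lam : {measure set T -> \bar R}) (pi : T -> R)
  (d : nat) (S : 'I_d -> set T) (rho : R -> R) (th : 'I_d -> R) (x : T) : R :=
  (Zrho lam pi S rho th)^-1 * \sum_(i < d) (pi x / rho (th i)) * \1_(S i) x.

Definition tv_norm_dens (lam : {measure set T -> \bar R}) (X : set T)
  (p q : T -> R) : \bar R :=
  ereal_sup [set `| \int[lam]_(x in X) (f x * (p x - q x))%:E |%E
            | f in [set f : T -> R | measurable_fun X f /\
                                     (forall x, X x -> `|f x| <= 1)]].

End Defs.

(* Main.v *)
Require Import Defs.
From HB Require Import structures.
From mathcomp Require Import all_boot all_order all_algebra.
From mathcomp Require Import all_classical all_reals all_analysis.
From mathcomp Require Import ring lra measurable_realfun.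
Import Order.TTheory GRing.Theory Num.Theory.
Local Open Scope classical_set_scope.
Local Open Scope ring_scope.

Local Open Scope ring_scope.

Lemma alg_bound (R : realType) (d : nat) (t r r' : 'I_d -> R) :
  (forall i, 0 < t i) -> (forall i, 0 < r i) -> (forall i, 0 < r' i) ->
  (0 < d)%N ->
  \sum_(i < d) `|(\sum_(j < d) t j / r j)^-1 / r i - (\sum_(j < d) t j / r' j)^-1 / r' i| * t i
  <= 2 * \sum_(i < d) `|1 - r' i / r i|.
Proof.
move=> t0 r0 r'0 d0.
set Z := \sum_(j < d) t j / r j; set Z' := \sum_(j < d) t j / r' j.
have Z0 : 0 < Z.
  rewrite /Z (bigD1 (Ordinal d0)) //=; apply: ltr_pwDl; first by apply: divr_gt0.
  by apply: sumr_ge0 => j _; apply/ltW/divr_gt0.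
have Z'0 : 0 < Z'.
  rewrite /Z' (bigD1 (Ordinal d0)) //=; apply: ltr_pwDl; first by apply: divr_gt0.
  by apply: sumr_ge0 => j _; apply/ltW/divr_gt0.
pose e i := t i * `|(r i)^-1 - (r' i)^-1|.
have step1 : forall i, `|Z^-1 / r i - Z'^-1 / r' i| * t i <=
    t i / r i * `|Z^-1 - Z'^-1| + e i / Z'.
  move=> i.
  have -> : Z^-1 / r i - Z'^-1 / r' i = (r i)^-1 * (Z^-1 - Z'^-1) + ((r i)^-1 - (r' i)^-1) / Z'.
    by rewrite /Z'; field; rewrite ?gt_eqF.
  rewrite mulrC; apply: le_trans; first apply: (ler_wpM2l (ltW (t0 i))); first exact: ler_normD.
  have ri : 0 <= (r i)^-1 by rewrite invr_ge0 ltW.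
  have zi : 0 <= Z'^-1 by rewrite invr_ge0 ltW.
  rewrite mulrDr /e normrM normrM (ger0_norm ri) (ger0_norm zi) !mulrA.
  by rewrite [X in _ + X]mulrAC.
have step2 : Z * `|Z^-1 - Z'^-1| <= \sum_(i < d) e i / Z'.
  have -> : Z * `|Z^-1 - Z'^-1| = `|Z' - Z| / Z'.
    have zi : 0 <= Z'^-1 by rewrite invr_ge0 ltW.
    rewrite -{1}(ger0_norm (ltW Z0)) -normrM.
    have -> : Z * (Z^-1 - Z'^-1) = (Z' - Z) * Z'^-1 by field; rewrite ?gt_eqF.
    by rewrite normrM (ger0_norm zi).
  rewrite -mulr_suml ler_wpM2r //; first by rewrite invr_ge0 ltW.
  rewrite /Z /Z' -sumrB; apply: le_trans; first exact: ler_norm_sum.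
  by apply: ler_sum => i _; rewrite /e -mulrBr normrM (gtr0_norm (t0 i)) distrC.
have step3 : forall i, e i / Z' <= `|1 - r' i / r i|.
  move=> i.
  have -> : e i / Z' = (t i / r' i) / Z' * `|1 - r' i / r i|.
    rewrite /e.
    have -> : (r i)^-1 - (r' i)^-1 = (r' i)^-1 * (r' i / r i - 1).
      by field; rewrite ?gt_eqF.
    have ri : 0 < (r' i)^-1 by rewrite invr_gt0.
    rewrite normrM (gtr0_norm ri) distrC.
    by rewrite !mulrA mulrAC.
  apply: ler_piMl => //; rewrite ler_pdivrMr // mul1r.
  rewrite /Z' (bigD1 i) //=; apply: ler_wpDr.
  by apply: sumr_ge0 => j _; apply/ltW/divr_gt0.
  done.
have H : \sum_(i < d) `|Z^-1 / r i - Z'^-1 / r' i| * t i <= \sum_(i < d) (t i / r i * `|Z^-1 - Z'^-1| + e i / Z') by apply: ler_sum => i _; exact: step1.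
apply: (le_trans H).
rewrite big_split /= -mulr_suml.
have -> : \sum_(i < d) t i / r i = Z by [].
rewrite mulr2n mulrDl mul1r; apply: lerD.
  by apply: le_trans step2 _; apply: ler_sum => i _; exact: step3.
by apply: ler_sum => i _; exact: step3.
Qed.

Theorem lemma6p2 (d0 : measure_display) (T : measurableType d0) (R : realType)
  (X : set T) (lam : {measure set T -> \bar R}) (pi : T -> R)
  (d : nat) (S : 'I_d -> set T) (rho : R -> R)
  (mX : measurable X)
  (pi_meas : measurable_fun X pi)
  (pi_ge0 : forall x, X x -> 0 <= pi x)
  (pi_prob : (\int[lam]_(x in X) (pi x)%:E = 1)%E)
  (S_meas : forall i, measurable (S i))
  (S_disj : forall i j, i != j -> S i `&` S j = set0)
  (S_cover : \bigcup_(i in [set: 'I_d]) S i = X)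
  (theta_star_pos : forall i, 0 < theta_star lam pi S i)
  (rho_meas : measurable_fun (`]0, 1[ : set R) rho)
  (rho_pos : forall t, 0 < t < 1 -> 0 < rho t)
  (th th' : 'I_d -> R) (hth : in_Theta th) (hth' : in_Theta th') :
  (tv_norm_dens lam X (pirho lam pi S rho th) (pirho lam pi S rho th')
   <= (2 * (d%:R - 1) * \sum_(i < d) `| 1 - rho (th' i) / rho (th i) |)%:E)%E.
Proof.
have d2 : (1 < d)%N.
  have aux : forall n (u : 'I_n -> R), (forall i, 0 < u i < 1) ->
      \sum_(i < n) u i = 1 -> (1 < n)%N.
    case => [|[|n]] //= th0 hlt hs.
    by move: hs; rewrite big_ord0 => /eqP; rewrite eq_sym oner_eq0.
    move: hs; rewrite big_ord1 => hs; have := hlt ord0; rewrite hs ltxx.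
    by case/andP.
  by case: hth => hlt hs; exact: aux hlt hs.
have dpos : (0 < d)%N by apply: ltn_trans d2.
set t := theta_star lam pi S.
have r0 : forall i, 0 < rho (th i) by move=> i; apply: rho_pos; exact: hth.1.
have r'0 : forall i, 0 < rho (th' i) by move=> i; apply: rho_pos; exact: hth'.1.
set c := fun i => (Zrho lam pi S rho th)^-1 / rho (th i) - (Zrho lam pi S rho th')^-1 / rho (th' i).
set g := fun i x => pi x * \1_(S i) x.
have pq : forall x, pirho lam pi S rho th x - pirho lam pi S rho th' x = \sum_(i < d) c i * g i x.
  move=> x; rewrite /pirho !mulr_sumr -sumrB; apply: eq_bigr => i _.
  by rewrite /c /g; ring.
have SX : forall i, S i `<=` X by move=> i x Sx; rewrite -S_cover; exists i.
have mg : forall i, measurable_fun X (g i).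
  by move=> i; apply: measurable_funM => //; exact: measurable_indic.
have g0 : forall i x, X x -> 0 <= g i x.
  by move=> i x Xx; rewrite /g mulr_ge0 // ?pi_ge0 // indicE; case: (_ \in _).
have gi_int : forall i, (\int[lam]_(x in X) (g i x)%:E = (t i)%:E)%E.
  move=> i.
  have E : (\int[lam]_(x in S i) (pi x)%:E = (t i)%:E)%E.
    rewrite /t /theta_star; have := theta_star_pos i; rewrite /theta_star.
    by case: (\int[lam]_(x in S i) (pi x)%:E)%E => [r _||] //=; rewrite ltxx.
  rewrite -E -[in RHS](setIidr (SX i)) integral_mkcondr epatch_indic.
  by apply: eq_integral => x _; rewrite /g /= EFinM.
apply/ereal_supP => _ [f [mf fb] <-].
set p := pirho lam pi S rho th; set q := pirho lam pi S rho th'.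
have hE : (fun x => f x * (p x - q x)) = (fun x => f x * \sum_(i < d) c i * g i x).
  by apply/funext => x; rewrite pq.
have mh : measurable_fun X (fun x => f x * (p x - q x)).
  rewrite hE; apply: measurable_funM => //; apply: measurable_sum => i.
  by apply: measurable_funM => //; exact: measurable_cst.
apply: (le_trans (le_abse_integral lam mX _)); first by apply/measurable_EFinP.
apply: (@le_trans _ _ (\int[lam]_(x in X) (\sum_(i < d) `|c i| * g i x)%:E)%E).
  apply: ge0_le_integral => //.
  - by apply: measurableT_comp => //; apply/measurable_EFinP.
  - apply/measurable_EFinP; apply: measurable_sum => i.
    by apply: measurable_funM => //; exact: measurable_cst.
  move=> x Xx /=; rewrite lee_fin pq normrM.
  apply: (@le_trans _ _ (`|\sum_(i < d) c i * g i x|)).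
    by rewrite ler_piMl // fb.
  apply: le_trans; first exact: ler_norm_sum.
  by apply: ler_sum => i _; rewrite normrM (ger0_norm (g0 i x Xx)).
rewrite (eq_integral (fun x => \sum_(i < d) (`|c i| * g i x)%:E)%E); last first.
  by move=> x _; rewrite sumEFin.
rewrite ge0_integral_sum //; first last.
- by move=> i x Xx; rewrite lee_fin mulr_ge0 // g0.
- by move=> i; apply/measurable_EFinP; apply: measurable_funM => //; exact: measurable_cst.
rewrite (eq_bigr (fun i => (`|c i| * t i)%:E)); last first.
  move=> i _; under eq_integral do rewrite EFinM.
  rewrite ge0_integralZl_EFin // ?gi_int //.
  - by move=> x Xx; have := g0 i x Xx; rewrite -lee_fin.
  - by apply/measurable_EFinP.
rewrite sumEFin lee_fin.
apply: le_trans; first exact: alg_bound.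
rewrite -[X in X <= _]mul1r mulrA ler_wpM2r //.
  by apply: sumr_ge0 => i _.
have : (2:R) <= d%:R by rewrite ler_nat.
lra.
Qed.
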